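(* Let $\hat S = \{{\cal S}_{1}, \ldots, {\cal S}_{k}\}$ ($k \ge 1$) be a finite set of services and let $q_1, \ldots, q_m$ be real-valued QoS parameters, each either positively monotonic (higher is better) or negatively monotonic (lower is better). For each parameter $q_t$ let $Max_t, Min_t$ be the maximum and minimum of $q_t({\cal S}_j)$ over $\hat S$, and define $NV_t({\cal S}_j) = 1$ if $Max_t = Min_t$, otherwise $NV_t({\cal S}_j) = \frac{q_t({\cal S}_j) - Min_t}{Max_t - Min_t}$ for positively monotonic $q_t$ and $NV_t({\cal S}_j) = \frac{Max_t - q_t({\cal S}_j)}{Max_t - Min_t}$ for negatively monotonic $q_t$; let $Dev_t({\cal S}_j) = 1 - NV_t({\cal S}_j)$. Choose the representative ${\cal S}_l$ as a service minimizing $\max_t Dev_t$; among tied services, choose one minimizing the second largest deviation, and so on (i.e. minimize lexicographically the vector of deviations sorted in non-increasing order), breaking any remaining ties arbitrarily. Then the QoS vector $(q_1({\cal S}_l), \ldots, q_m({\cal S}_l))$ lies on the Pareto-optimal front of $\{(q_1({\cal S}_j), \ldots, q_m({\cal S}_j)) : 1 \le j \le k\}$: there is no ${\cal S}_j \in \hat S$ that is at least as good as ${\cal S}_l$ in every parameter and strictly better in at least one parameter.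
   Context: In the first-level abstraction of web services, each class of services with identical input and output sets is replaced by one abstract service, which is assigned the QoS values of the ''best representative'' service of the class selected as described in the claim. ''At least as good'' means $\ge$ for positively monotonic parameters and $\le$ for negatively monotonic parameters. *)

(* Defs.v *)
(* Services are indexed by 'I_k, QoS parameters by 'I_m.
   q j t = value of parameter t on service j; pos t = true iff q_t is
   positively monotonic (higher is better), false iff negatively monotonic. *)
From mathcomp Require Import all_boot all_order all_algebra.
Set Implicit Arguments. Unset Strict Implicit. Unset Printing Implicit Defensive.
Import Order.TTheory GRing.Theory Num.Theory.
Local Open Scope ring_scope.

Section QoS.
Variables (R : realFieldType) (k m : nat).
Variable q : 'I_k -> 'I_m -> R.
Variable pos : 'I_m -> bool.

(* Max_t and Min_t over the (nonempty) set of services; the seed of the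
   iterated max/min is a value of q itself, so this is the true max/min
   whenever k >= 1. *)
Definition Maxq (t : 'I_m) : R :=
  \big[Num.max/ head 0 [seq q j t | j <- enum 'I_k]]_(j < k) q j t.
Definition Minq (t : 'I_m) : R :=
  \big[Num.min/ head 0 [seq q j t | j <- enum 'I_k]]_(j < k) q j t.

Definition NV (t : 'I_m) (j : 'I_k) : R :=
  if Maxq t == Minq t then 1
  else if pos t then (q j t - Minq t) / (Maxq t - Minq t)
  else (Maxq t - q j t) / (Maxq t - Minq t).

Definition Dev (t : 'I_m) (j : 'I_k) : R := 1 - NV t j.

Definition sorted_devs (j : 'I_k) : seq R :=
  sort (fun x y : R => y <= x) [seq Dev t j | t <- enum 'I_m].

Definition at_least_as_good (t : 'I_m) (j l : 'I_k) : bool :=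
  if pos t then q l t <= q j t else q j t <= q l t.
Definition strictly_better (t : 'I_m) (j l : 'I_k) : bool :=
  if pos t then q l t < q j t else q j t < q l t.
End QoS.

Fixpoint lex_le (R : realFieldType) (s1 s2 : seq R) : bool :=
  match s1, s2 with
  | x :: s1', y :: s2' => (x < y) || ((x == y) && lex_le s1' s2')
  | _, _ => true
  end.

(* Main.v *)
Require Import Defs.
From mathcomp Require Import all_boot all_order all_algebra.
Import Order.TTheory GRing.Theory Num.Theory.
Local Open Scope ring_scope.

Section S.
Variable R : realDomainType.
Let ge := (fun x y : R => y <= x).
Lemma ge_tr : transitive ge. Proof. by move=> a b c h1 h2; rewrite /ge (le_trans h2 h1). Qed.
Lemma ge_refl : reflexive ge. Proof. by move=> a; rewrite /ge. Qed.
Lemma ge_tot : total ge. Proof. by move=> a b; rewrite /ge le_total. Qed.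

Lemma L1 (s : seq R) i : sorted ge s -> (i < size s)%N ->
  (i < count (fun x : R => (nth 0%R s i <= x)%R) s)%N.
Proof.
move=> ss hi; set x0 := nth 0%R s i; rewrite -(cat_take_drop i.+1 s) count_cat.
have hs := size_takel hi.
rewrite (_ : count _ (take i.+1 s) = i.+1); last first.
  apply/eqP; rewrite -{2}hs -all_count.
  apply/(all_nthP 0%R) => p; rewrite hs => hp.
  rewrite nth_take //.
  apply: (sorted_leq_nth ge_tr ge_refl 0%R ss); rewrite ?inE //.
  exact: leq_trans hp hi.
by rewrite ltnS leq_addr.
Qed.

Lemma L2 (s : seq R) i v : sorted ge s -> (i < size s)%N -> nth 0%R s i < v ->
  (count (fun x : R => (v <= x)%R) s <= i)%N.
Proof.
move=> ss hi hv; rewrite -(cat_take_drop i s) count_cat.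
rewrite (_ : count _ (drop i s) = 0%N); last first.
  apply/eqP; rewrite -leqn0 leqNgt -has_count; apply/negP => /(has_nthP 0) [p].
  rewrite size_drop nth_drop => hp; apply/negP; rewrite -ltNge.
  apply: le_lt_trans hv.
  apply: (sorted_leq_nth ge_tr ge_refl 0 ss); rewrite ?inE ?leq_addr //.
  by rewrite -ltn_subRL.
rewrite addn0; apply: leq_trans (count_size _ _) _.
by rewrite size_takel // ltnW.
Qed.

Lemma LA (a b : seq R) : size a = size b ->
  (forall v, count (fun x : R => (v <= x)%R) a <= count (fun x : R => (v <= x)%R) b)%N ->
  forall i, (i < size a)%N -> (nth 0 (sort ge a) i <= nth 0 (sort ge b) i)%R.
Proof.
move=> hab hc i hi; rewrite leNgt; apply/negP => hlt.
have ssa := sort_sorted ge_tot a; have ssb := sort_sorted ge_tot b.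
have h1 := @L1 _ i ssa; rewrite size_sort in h1; have {h1} h1 := h1 hi.
have h2 := @L2 _ i _ ssb; rewrite size_sort -hab in h2; have {h2} h2 := h2 _ hi hlt.
move: (hc (nth 0 (sort ge a) i)).
have pa := permP (permEl (perm_sort ge a)) ; have pb := permP (permEl (perm_sort ge b)). rewrite -pa -pb. move=> h3. have := leq_ltn_trans (leq_trans h3 h2) h1. by rewrite ltnn.
Qed.
End S.

Lemma LB (R : realFieldType) (s u : seq R) : size s = size u ->
  (forall i, (i < size s)%N -> nth 0 u i <= nth 0 s i) -> lex_le s u -> s = u.
Proof.
elim: s u => [|x s IH] [|y u] //= [hsz] hpw /orP [hlt | /andP [/eqP exy hl]].
  by have := hpw 0%N isT; rewrite /= leNgt hlt.
by rewrite exy (IH u hsz (fun i hi => hpw i.+1 hi) hl).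
Qed.

Section Q.
Variables (R : realFieldType) (k m : nat) (q : 'I_k -> 'I_m -> R) (pos : 'I_m -> bool).

Lemma seq_max_ge (I : eqType) (s : seq I) (x : R) F j0 : j0 \in s ->
  F j0 <= \big[Num.max/x]_(j <- s) F j.
Proof.
elim: s => //= a s IH; rewrite inE big_cons => /orP [/eqP -> | h].
  by rewrite le_max lexx.
by rewrite le_max IH ?orbT.
Qed.
Lemma seq_min_le (I : eqType) (s : seq I) (x : R) F j0 : j0 \in s ->
  \big[Num.min/x]_(j <- s) F j <= F j0.
Proof.
elim: s => //= a s IH; rewrite inE big_cons => /orP [/eqP -> | h].
  by rewrite ge_min lexx.
by rewrite ge_min IH ?orbT.
Qed.
Lemma max_seed (x : R) F : x <= \big[Num.max/x]_(j < k) F j.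
Proof. by elim/big_rec: _ => // i acc _ h; rewrite le_max h orbT. Qed.
Lemma min_seed (x : R) F : \big[Num.min/x]_(j < k) F j <= x.
Proof. by elim/big_rec: _ => // i acc _ h; rewrite ge_min h orbT. Qed.

Lemma q_le_Max t j : q j t <= Maxq q t.
Proof. by rewrite /Maxq seq_max_ge // mem_index_enum. Qed.
Lemma Min_le_q t j : Minq q t <= q j t.
Proof. by rewrite /Minq seq_min_le // mem_index_enum. Qed.
Lemma Min_le_Max t : Minq q t <= Maxq q t.
Proof. exact: le_trans (min_seed _ _) (max_seed _ _). Qed.

Lemma Dev_le t j l : at_least_as_good q pos t j l -> Dev q pos t j <= Dev q pos t l.
Proof.
rewrite /at_least_as_good /Dev /NV; case: eqP => // hMm.
have hD : 0 < (Maxq q t - Minq q t)^-1.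
  by rewrite invr_gt0 subr_gt0 lt_neqAle (Min_le_Max t) andbT eq_sym; apply/eqP.
case: (pos t) => h; rewrite lerD2l lerN2 ler_pM2r //.
  by rewrite lerD2r.
by rewrite lerD2l lerN2.
Qed.

Lemma Dev_lt t j l : strictly_better q pos t j l -> Dev q pos t j < Dev q pos t l.
Proof.
rewrite /strictly_better /Dev /NV; case: eqP => hMm.
  have := q_le_Max t j; have := q_le_Max t l; have := Min_le_q t j; have := Min_le_q t l.
  rewrite hMm => h1 h2 h3 h4.
  have e1 : q j t = Minq q t by apply/eqP; rewrite eq_le h4 h2.
  have e2 : q l t = Minq q t by apply/eqP; rewrite eq_le h3 h1.
  by rewrite e1 e2 ltxx if_same.
have hD : 0 < (Maxq q t - Minq q t)^-1.
  by rewrite invr_gt0 subr_gt0 lt_neqAle (Min_le_Max t) andbT eq_sym; apply/eqP.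
case: (pos t) => h; rewrite ltrD2l ltrN2 ltr_pM2r //.
  by rewrite ltrD2r.
by rewrite ltrD2l ltrN2.
Qed.
End Q.

Theorem lemma5 (R : realFieldType) (k m : nat) (hk : (0 < k)%N)
  (q : 'I_k -> 'I_m -> R) (pos : 'I_m -> bool) (l : 'I_k)
  (hl : forall j : 'I_k, lex_le (sorted_devs q pos l) (sorted_devs q pos j)) :
  ~ exists j : 'I_k,
      (forall t : 'I_m, at_least_as_good q pos t j l) /\
      (exists t : 'I_m, strictly_better q pos t j l).
Proof.
move=> [j [hge [t0 hst]]].
have hle t := @Dev_le R k m q pos t j l (hge t).
have hlt := @Dev_lt R k m q pos t0 j l hst.
have heq : sorted_devs q pos l = sorted_devs q pos j.
  apply: LB (hl j); first by rewrite /sorted_devs !size_sort !size_map.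
  move=> i; rewrite /sorted_devs size_sort => hi; apply: LA; rewrite ?size_map //.
  move=> v; rewrite !count_map; apply: sub_count => t /= h; exact: le_trans h (hle t).
  by move: hi; rewrite size_map -enumT.
have : \sum_(x <- sorted_devs q pos l) x = \sum_(x <- sorted_devs q pos j) x by rewrite heq.
rewrite /sorted_devs !(perm_big _ (permEl (perm_sort _ _))) !big_map -!enumT !big_enum /=.
rewrite (bigD1 t0) //= [X in _ = X](bigD1 t0) //= => e.
have : \sum_(t | t != t0) Dev q pos t j + Dev q pos t0 j < \sum_(t | t != t0) Dev q pos t l + Dev q pos t0 l.
  by apply: ler_ltD => //; apply: ler_sum => t _.
by rewrite addrC [X in _ < X]addrC e ltxx.
Qed.
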